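(* Let $q\in\mathbb C$ with $|q|=1$ and $q^2\neq 1$, and let $A,B$ be self-adjoint operators on a Hilbert space $\mathcal H$. Suppose $\lambda,\lambda q\in\rho(A)$ and $\mu,\mu q\in\rho(B)$. (i) If $\mathcal D$ is a linear subspace of $\mathcal D(AB)\cap\mathcal D(BA)$ and $ABf=qBAf$ for all $f\in\mathcal D$, then $\mathcal E:=(A-\lambda I)\mathcal D$ is a linear subspace of $\mathcal D(B)$ and $$BR_\lambda(A)g=qR_{\lambda q}(A)Bg\qquad(\ast)$$ for all $g\in\mathcal E$ (in particular $R_\lambda(A)g\in\mathcal D(B)$). (ii) If $\mathcal E$ is a linear subspace of $\mathcal D(B)$ such that $R_\lambda(A)g\in\mathcal D(B)$ and $(\ast)$ holds for all $g\in\mathcal E$, then every $f\in\mathcal D:=R_\lambda(A)\mathcal E$ lies in $\mathcal D(AB)\cap\mathcal D(BA)$ and satisfies $ABf=qBAf$. (iii) If $\mathcal E$ is a linear subspace of $\mathcal D(B)$ and $(\ast)$ holds for all $g\in\mathcal E$, then $$R_\lambda(A)R_\mu(B)h=qR_{\mu q}(B)R_{\lambda q}(A)h+\mu\lambda q(q-1)R_{\mu q}(B)R_{\lambda q}(A)R_\lambda(A)R_\mu(B)h\qquad(\ast\ast)$$ for all $h\in\mathcal F:=(B-\mu I)\mathcal E$. (iv) If $\mathcal F$ is a linear subspace of $\mathcal H$ such that $(\ast\ast)$ holds for all $h\in\mathcal F$, then $(\ast)$ holds (with $R_\lambda(A)g\in\mathcal D(B)$) for all $g\in\mathcal E:=R_\mu(B)\mathcal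 F$.
   Context: For a densely defined closed operator $T$, $\mathcal D(T)$ denotes its domain, $\rho(T)$ its resolvent set and $R_\lambda(T)=(T-\lambda I)^{-1}$ its resolvent for $\lambda\in\rho(T)$. Products of unbounded operators have their natural domains, e.g. $\mathcal D(AB)=\{f\in\mathcal D(B): Bf\in\mathcal D(A)\}$. *)

(* Defs.v *)
From Stdlib Require Import Reals ClassicalEpsilon.
Open Scope R_scope.

Record Cpx := mkC { Re : R; Im : R }.
Definition Czero : Cpx := mkC 0 0.
Definition Cone : Cpx := mkC 1 0.
Definition Cadd (z w : Cpx) : Cpx := mkC (Re z + Re w) (Im z + Im w).
Definition Copp (z : Cpx) : Cpx := mkC (- Re z) (- Im z).
Definition Csub (z w : Cpx) : Cpx := Cadd z (Copp w).
Definition Cmul (z w : Cpx) : Cpx :=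
  mkC (Re z * Re w - Im z * Im w) (Re z * Im w + Im z * Re w).
Definition Cconj (z : Cpx) : Cpx := mkC (Re z) (- Im z).
Definition Cabs (z : Cpx) : R := sqrt (Re z * Re z + Im z * Im z).

Record Hilbert := {
  hcar :> Type;
  hzero : hcar;
  hadd : hcar -> hcar -> hcar;
  hopp : hcar -> hcar;
  hscal : Cpx -> hcar -> hcar;
  hinner : hcar -> hcar -> Cpx;
  hadd_assoc : forall x y z, hadd x (hadd y z) = hadd (hadd x y) z;
  hadd_comm : forall x y, hadd x y = hadd y x;
  hadd_0 : forall x, hadd x hzero = x;
  hadd_opp : forall x, hadd x (hopp x) = hzero;
  hscal_1 : forall x, hscal Cone x = x;
  hscal_assoc : forall a b x, hscal a (hscal b x) = hscal (Cmul a b) x;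
  hscal_addv : forall a x y, hscal a (hadd x y) = hadd (hscal a x) (hscal a y);
  hscal_adds : forall a b x, hscal (Cadd a b) x = hadd (hscal a x) (hscal b x);
  (* inner product, linear in the first argument *)
  hinner_addl : forall x y z, hinner (hadd x y) z = Cadd (hinner x z) (hinner y z);
  hinner_scall : forall a x y, hinner (hscal a x) y = Cmul a (hinner x y);
  hinner_conj : forall x y, hinner y x = Cconj (hinner x y);
  hinner_pos : forall x, 0 <= Re (hinner x x);
  hinner_def : forall x, hinner x x = Czero -> x = hzero;
  hcomplete : forall u : nat -> hcar,
    (forall eps, 0 < eps -> exists N, forall n m, (N <= n)%nat -> (N <= m)%nat ->
        sqrt (Re (hinner (hadd (u n) (hopp (u m))) (hadd (u n) (hopp (u m))))) < eps) ->
    exists l, forall eps, 0 < eps -> exists N, forall n, (N <= n)%nat ->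
        sqrt (Re (hinner (hadd (u n) (hopp l)) (hadd (u n) (hopp l)))) < eps
}.
Arguments hzero {h}. Arguments hadd {h}. Arguments hopp {h}.
Arguments hscal {h}. Arguments hinner {h}.

Section Ops.
Context {H : Hilbert}.

Definition hsub (x y : H) : H := hadd x (hopp y).
Definition hnorm (x : H) : R := sqrt (Re (hinner x x)).

(* linear subspace (no closedness required) *)
Definition subspace (S : H -> Prop) : Prop :=
  S hzero /\ (forall x y, S x -> S y -> S (hadd x y)) /\
  (forall a x, S x -> S (hscal a x)).

Record operator := mkOp { dom : H -> Prop; app : H -> H }.

Definition linear_op (T : operator) : Prop :=
  subspace (dom T) /\
  (forall x y, dom T x -> dom T y -> app T (hadd x y) = hadd (app T x) (app T y)) /\
  (forall a x, dom T x -> app T (hscal a x) = hscal a (app T x)).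

Definition densely_defined (T : operator) : Prop :=
  forall x eps, 0 < eps -> exists y, dom T y /\ hnorm (hsub x y) < eps.

(* T equals its adjoint: D(T^adj) = {y | exists z, forall x in D(T), <Tx,y> = <x,z>}, T^adj y = z *)
Definition self_adjoint (T : operator) : Prop :=
  linear_op T /\ densely_defined T /\
  (forall y, dom T y <->
     exists z, forall x, dom T x -> hinner (app T x) y = hinner x z) /\
  (forall x y, dom T x -> dom T y -> hinner (app T x) y = hinner x (app T y)).

Definition in_resolvent_set (T : operator) (l : Cpx) : Prop :=
  (forall f1 f2, dom T f1 -> dom T f2 ->
     hsub (app T f1) (hscal l f1) = hsub (app T f2) (hscal l f2) -> f1 = f2) /\
  (forall g, exists f, dom T f /\ hsub (app T f) (hscal l f) = g) /\
  (exists M, forall f, dom T f -> hnorm f <= M * hnorm (hsub (app T f) (hscal l f))).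

(* R_l(T) g = (T - l I)^{-1} g, the unique f in D(T) with (T - l)f = g
   (meaningful when l is in the resolvent set) *)
Definition resolvent (T : operator) (l : Cpx) (g : H) : H :=
  epsilon (inhabits hzero) (fun f => dom T f /\ hsub (app T f) (hscal l f) = g).

(* natural domain of a product: D(ST) = {f in D(T) | Tf in D(S)} *)
Definition dom_comp (S T : operator) (f : H) : Prop := dom T f /\ dom S (app T f).

Definition shift_image (T : operator) (l : Cpx) (S : H -> Prop) (g : H) : Prop :=
  exists f, S f /\ g = hsub (app T f) (hscal l f).
Definition resolvent_image (T : operator) (l : Cpx) (S : H -> Prop) (f : H) : Prop :=
  exists g, S g /\ f = resolvent T l g.

Definition rel_star (A B : operator) (q l : Cpx) (g : H) : Prop :=
  dom B (resolvent A l g) /\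
  app B (resolvent A l g) = hscal q (resolvent A (Cmul l q) (app B g)).

Definition rel_star2 (A B : operator) (q l m : Cpx) (h : H) : Prop :=
  resolvent A l (resolvent B m h) =
  hadd (hscal q (resolvent B (Cmul m q) (resolvent A (Cmul l q) h)))
       (hscal (Cmul (Cmul (Cmul m l) q) (Csub q Cone))
          (resolvent B (Cmul m q) (resolvent A (Cmul l q)
             (resolvent A l (resolvent B m h))))).
End Ops.
Arguments operator : clear implicits.

(* Main.v *)
Require Import Defs.
From Stdlib Require Import Reals.
From Stdlib Require Import Lra Psatz ClassicalEpsilon.
Open Scope R_scope.

Lemma Ceq (z w : Cpx) : Re z = Re w -> Im z = Im w -> z = w.
Proof. destruct z, w; simpl; intros; subst; reflexivity. Qed.
Ltac ceq := apply Ceq; simpl; ring.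

Lemma add0l {H : Hilbert} (x : H) : hadd hzero x = x.
Proof. rewrite hadd_comm. apply hadd_0. Qed.

Lemma scal0 {H : Hilbert} (x : H) : hscal Czero x = hzero.
Proof.
  set (s := hscal Czero x).
  assert (E : hadd s s = s).
  { unfold s; rewrite <- hscal_adds. f_equal. ceq. }
  transitivity (hadd (hadd s s) (hopp s)).
  - rewrite <- hadd_assoc, hadd_opp, hadd_0. reflexivity.
  - rewrite E, hadd_opp; reflexivity.
Qed.

Lemma scalz {H : Hilbert} (a : Cpx) : hscal a (@hzero H) = hzero.
Proof.
  transitivity (hscal a (hscal Czero (@hzero H))).
  - rewrite scal0; reflexivity.
  - rewrite hscal_assoc. replace (Cmul a Czero) with Czero by ceq. apply scal0.
Qed.

Lemma opp_scal {H : Hilbert} (x : H) : hopp x = hscal (Copp Cone) x.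
Proof.
  assert (E : hadd x (hscal (Copp Cone) x) = hzero).
  { transitivity (hadd (hscal Cone x) (hscal (Copp Cone) x)).
    - rewrite hscal_1; reflexivity.
    - rewrite <- hscal_adds. replace (Cadd Cone (Copp Cone)) with Czero by ceq.
      apply scal0. }
  transitivity (hadd (hopp x) (hadd x (hscal (Copp Cone) x))).
  - rewrite E, hadd_0; reflexivity.
  - rewrite hadd_assoc, (hadd_comm _ (hopp x) x), hadd_opp, add0l; reflexivity.
Qed.

Lemma sub_def {H : Hilbert} (x y : H) : hsub x y = hadd x (hscal (Copp Cone) y).
Proof. unfold hsub; rewrite opp_scal; reflexivity. Qed.

Lemma hsub_eq {H : Hilbert} (x y z : H) : hsub x y = z -> x = hadd z y.
Proof.
  intro E; subst z; unfold hsub.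
  rewrite <- hadd_assoc, (hadd_comm _ (hopp y) y), hadd_opp, hadd_0. reflexivity.
Qed.

Lemma eq_hsub {H : Hilbert} (x y z : H) : x = hadd z y -> hsub x y = z.
Proof.
  intro E; subst x; unfold hsub; rewrite <- hadd_assoc, hadd_opp, hadd_0; reflexivity.
Qed.

Lemma combine {H : Hilbert} a b (x : H) :
  hadd (hscal a x) (hscal b x) = hscal (Cadd a b) x.
Proof. rewrite hscal_adds; reflexivity. Qed.

Lemma add4 {H : Hilbert} (a b c d : H) :
  hadd (hadd a b) (hadd c d) = hadd (hadd a c) (hadd b d).
Proof.
  rewrite <- !hadd_assoc. f_equal. rewrite !hadd_assoc. f_equal. apply hadd_comm.
Qed.

Section Lin.
Lemma dom_zero {H : Hilbert} (T : operator H) : linear_op T -> dom T hzero.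
Proof. intros [[? _] _]; auto. Qed.
Lemma dom_add {H : Hilbert} (T : operator H) x y : linear_op T -> dom T x -> dom T y -> dom T (hadd x y).
Proof. intros [[_ [? _]] _]; auto. Qed.
Lemma dom_scal {H : Hilbert} (T : operator H) a x : linear_op T -> dom T x -> dom T (hscal a x).
Proof. intros [[_ [_ ?]] _]; auto. Qed.
Lemma dom_sub {H : Hilbert} (T : operator H) x y : linear_op T -> dom T x -> dom T y -> dom T (hsub x y).
Proof. intros L ? ?; rewrite sub_def; apply dom_add; auto; apply dom_scal; auto. Qed.
Lemma lin_add {H : Hilbert} (T : operator H) x y : linear_op T -> dom T x -> dom T y ->
  app T (hadd x y) = hadd (app T x) (app T y).
Proof. intros [_ [? _]]; auto. Qed.
Lemma lin_scal {H : Hilbert} (T : operator H) a x : linear_op T -> dom T x ->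
  app T (hscal a x) = hscal a (app T x).
Proof. intros [_ [_ ?]]; auto. Qed.
Lemma app_zero {H : Hilbert} (T : operator H) : linear_op T -> app T hzero = hzero.
Proof.
  intro L. transitivity (app T (hscal Czero (@hzero H))).
  - rewrite scal0; reflexivity.
  - rewrite lin_scal, scal0; auto. apply dom_zero; auto.
Qed.
Lemma app_sub {H : Hilbert} (T : operator H) x y : linear_op T -> dom T x -> dom T y ->
  app T (hsub x y) = hsub (app T x) (app T y).
Proof.
  intros L ? ?. rewrite !sub_def, lin_add, lin_scal; auto. apply dom_scal; auto.
Qed.
End Lin.

Definition Sh {H : Hilbert} (T : operator H) l x := hsub (app T x) (hscal l x).

Lemma S_add {H : Hilbert} (T : operator H) l x y : linear_op T -> dom T x -> dom T y ->
  Sh T l (hadd x y) = hadd (Sh T l x) (Sh T l y).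
Proof.
  intros L ? ?. unfold Sh. rewrite lin_add by auto. rewrite !sub_def, !hscal_addv.
  apply add4.
Qed.

Lemma S_scal {H : Hilbert} (T : operator H) l a x : linear_op T -> dom T x ->
  Sh T l (hscal a x) = hscal a (Sh T l x).
Proof.
  intros L ?. unfold Sh. rewrite lin_scal by auto. rewrite !sub_def, hscal_addv, !hscal_assoc.
  apply f_equal. apply (f_equal (fun c => hscal c x)). ceq.
Qed.

Lemma S_zero {H : Hilbert} (T : operator H) l : linear_op T -> Sh T l hzero = hzero.
Proof.
  intro L. unfold Sh. rewrite app_zero, scalz, sub_def, scalz, hadd_0 by auto. reflexivity.
Qed.

Lemma R_spec {H : Hilbert} (T : operator H) l g : in_resolvent_set T l ->
  dom T (resolvent T l g) /\ Sh T l (resolvent T l g) = g.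
Proof.
  intros RS. unfold resolvent. apply epsilon_spec. destruct RS as [_ [Hs _]]. exact (Hs g).
Qed.

Lemma R_uniq {H : Hilbert} (T : operator H) l f g : in_resolvent_set T l ->
  dom T f -> Sh T l f = g -> resolvent T l g = f.
Proof.
  intros RS Df Sf. destruct (R_spec T l g RS) as [D1 S1].
  destruct RS as [Hi _]. apply Hi; auto. unfold Sh in *. rewrite S1, Sf; reflexivity.
Qed.

Lemma R_add {H : Hilbert} (T : operator H) l g1 g2 : linear_op T -> in_resolvent_set T l ->
  resolvent T l (hadd g1 g2) = hadd (resolvent T l g1) (resolvent T l g2).
Proof.
  intros L RS. destruct (R_spec T l g1 RS) as [D1 S1]. destruct (R_spec T l g2 RS) as [D2 S2].
  apply R_uniq; auto. apply dom_add; auto. rewrite S_add, S1, S2; auto.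
Qed.

Lemma R_scal {H : Hilbert} (T : operator H) l a g : linear_op T -> in_resolvent_set T l ->
  resolvent T l (hscal a g) = hscal a (resolvent T l g).
Proof.
  intros L RS. destruct (R_spec T l g RS) as [D1 S1].
  apply R_uniq; auto. apply dom_scal; auto. rewrite S_scal, S1; auto.
Qed.

Lemma R_app {H : Hilbert} (T : operator H) l g : in_resolvent_set T l ->
  app T (resolvent T l g) = hadd g (hscal l (resolvent T l g)).
Proof.
  intros RS. destruct (R_spec T l g RS) as [_ S1]. apply hsub_eq. exact S1.
Qed.

Lemma R_id {H : Hilbert} (T : operator H) l l' g : linear_op T ->
  in_resolvent_set T l -> in_resolvent_set T l' ->
  resolvent T l' g = hadd (resolvent T l g)
     (hscal (Csub l' l) (resolvent T l' (resolvent T l g))).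
Proof.
  intros L RS RS'.
  destruct (R_spec T l g RS) as [Dp Sp].
  destruct (R_spec T l' (resolvent T l g) RS') as [DY SY].
  apply R_uniq; auto. apply dom_add; auto; apply dom_scal; auto.
  rewrite S_add, S_scal, SY; auto. 2: apply dom_scal; auto.
  unfold Sh at 1. rewrite (R_app T l g RS).
  rewrite sub_def, hscal_assoc. rewrite <- !hadd_assoc. rewrite !combine.
  match goal with |- hadd _ (hscal ?c _) = _ => replace c with Czero by ceq end.
  rewrite scal0, hadd_0. reflexivity.
Qed.

Lemma key {H : Hilbert} (q m l c : Cpx) (X p Y : H) :
  c = Cmul (Cmul (Cmul m l) q) (Csub q Cone) ->
  hscal q (hadd X (hscal m (hadd p (hscal (Csub (Cmul l q) l) Y)))) =
  hadd (hadd (hscal q X) (hscal c Y)) (hscal (Cmul m q) p).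
Proof.
  intro; subst c.
  repeat first [rewrite hscal_addv | rewrite hscal_assoc].
  rewrite <- hadd_assoc. f_equal. rewrite hadd_comm. f_equal; f_equal; ceq.
Qed.

Theorem mainTheorem1 (H : Hilbert) (q l m : Cpx) (A B : operator H)
  (hq : Cabs q = 1%R) (hq2 : Cmul q q <> Cone)
  (hA : self_adjoint A) (hB : self_adjoint B)
  (hl : in_resolvent_set A l) (hlq : in_resolvent_set A (Cmul l q))
  (hm : in_resolvent_set B m) (hmq : in_resolvent_set B (Cmul m q)) :
  (* (i) *)
  (forall D : H -> Prop, subspace D ->
     (forall f, D f -> dom_comp A B f /\ dom_comp B A f) ->
     (forall f, D f -> app A (app B f) = hscal q (app B (app A f))) ->
     subspace (shift_image A l D) /\
     (forall g, shift_image A l D g -> dom B g) /\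
     (forall g, shift_image A l D g -> rel_star A B q l g)) /\
  (* (ii) *)
  (forall E : H -> Prop, subspace E -> (forall g, E g -> dom B g) ->
     (forall g, E g -> rel_star A B q l g) ->
     forall f, resolvent_image A l E f ->
       dom_comp A B f /\ dom_comp B A f /\
       app A (app B f) = hscal q (app B (app A f))) /\
  (* (iii) *)
  (forall E : H -> Prop, subspace E -> (forall g, E g -> dom B g) ->
     (forall g, E g -> rel_star A B q l g) ->
     forall h, shift_image B m E h -> rel_star2 A B q l m h) /\
  (* (iv) *)
  (forall F : H -> Prop, subspace F ->
     (forall h, F h -> rel_star2 A B q l m h) ->
     forall g, resolvent_image B m F g -> rel_star A B q l g).
Proof.
  destruct hA as [LA _]. destruct hB as [LB _].
  assert (Hq1 : Re q * Re q + Im q * Im q = 1).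
  { unfold Cabs in hq. rewrite <- (sqrt_sqrt (Re q * Re q + Im q * Im q)) by nra.
    rewrite hq. ring. }
  assert (qq : Cmul q (Cconj q) = Cone).
  { apply Ceq; simpl; nra. }
  split; [|split; [|split]].
  -
    intros D HD Hdom Hcomm.
    assert (DA : forall f, D f -> dom A f) by (intros f Df; apply (Hdom f Df)).
    assert (DB : forall f, D f -> dom B f) by (intros f Df; apply (Hdom f Df)).
    assert (DAB : forall f, D f -> dom A (app B f)) by (intros f Df; apply (Hdom f Df)).
    assert (DBA : forall f, D f -> dom B (app A f)) by (intros f Df; apply (Hdom f Df)).
    destruct HD as [D0 [Dadd Dscal]].
    split; [|split].
    + split; [|split].
      * exists hzero. split; auto. symmetry. apply (S_zero A l LA).
      * intros x y [f1 [D1 ->]] [f2 [D2 ->]]. exists (hadd f1 f2). split; auto.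
        symmetry. apply (S_add A l f1 f2 LA); auto.
      * intros a x [f1 [D1 ->]]. exists (hscal a f1). split; auto.
        symmetry. apply (S_scal A l a f1 LA); auto.
    + intros g [f [Df ->]]. apply dom_sub; auto.
    + intros g [f [Df ->]].
      assert (Rf : resolvent A l (hsub (app A f) (hscal l f)) = f).
      { apply R_uniq; auto. }
      unfold rel_star. rewrite Rf. split; [auto|].
      assert (Ru : resolvent A (Cmul l q) (app B (hsub (app A f) (hscal l f)))
                   = hscal (Cconj q) (app B f)).
      { apply R_uniq; auto. apply dom_scal; auto.
        unfold Sh. rewrite lin_scal, Hcomm, app_sub, lin_scal; auto.
        rewrite !hscal_assoc.
        replace (Cmul (Cconj q) q) with Cone by (rewrite <- qq; ceq).
        replace (Cmul (Cmul l q) (Cconj q)) with l.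
        2:{ transitivity (Cmul l (Cmul q (Cconj q))). rewrite qq; ceq. ceq. }
        rewrite hscal_1. reflexivity. }
      rewrite Ru, hscal_assoc, qq, hscal_1. reflexivity.
  -
    intros E HE HEB HEs f [g [Eg ->]].
    destruct (R_spec A l g hl) as [DAf _].
    pose proof (R_app A l g hl) as RA.
    destruct (HEs g Eg) as [DBf BF].
    destruct (R_spec A (Cmul l q) (app B g) hlq) as [DAk _].
    pose proof (R_app A (Cmul l q) (app B g) hlq) as RK.
    split; [|split].
    + split; auto. rewrite BF. apply dom_scal; auto.
    + split; auto. rewrite RA. apply dom_add; auto. apply dom_scal; auto.
    + rewrite BF, lin_scal, RK, RA, lin_add, lin_scal, BF; auto.
      2: apply dom_scal; auto.
      rewrite hscal_assoc. reflexivity.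
  -
    intros E HE HEB HEs h [g [Eg Eh]].
    assert (DBg : dom B g) by auto.
    assert (Rm : resolvent B m h = g).
    { rewrite Eh. apply R_uniq; auto. }
    assert (Bg : app B g = hadd h (hscal m g)).
    { apply hsub_eq. symmetry. exact Eh. }
    unfold rel_star2. rewrite Rm.
    destruct (HEs g Eg) as [DBp Bp].
    rewrite <- (R_scal B (Cmul m q) q), <- (R_scal B (Cmul m q)), <- R_add; auto.
    symmetry. apply R_uniq; auto.
    unfold Sh. apply eq_hsub.
    rewrite Bp, Bg, R_add, R_scal, (R_id A l (Cmul l q) g); auto.
    apply key. reflexivity.
  -
    intros F HF Hs g [h [Fh ->]].
    pose proof (Hs h Fh) as E2. unfold rel_star2 in E2.
    rewrite <- (R_scal B (Cmul m q) q), <- (R_scal B (Cmul m q)), <- R_add in E2; auto.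
    set (p := resolvent A l (resolvent B m h)) in *.
    match type of E2 with _ = resolvent _ _ ?Z =>
      destruct (R_spec B (Cmul m q) Z hmq) as [DZ _];
      pose proof (R_app B (Cmul m q) Z hmq) as BZ end.
    rewrite <- E2 in BZ, DZ.
    pose proof (R_app B m h hm) as Bg.
    unfold rel_star. fold p. split; auto.
    rewrite BZ, Bg, R_add, R_scal, (R_id A l (Cmul l q) (resolvent B m h)); auto.
    symmetry. apply key. reflexivity.
Qed.
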